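(* Let $V(1),\dots,V(T)\in\mathbb R^p$ and $0=\nu_0<\nu_1<\dots<\nu_M=T$ with $M\ge2$ be such that $V(\nu_m+1)=\dots=V(\nu_{m+1})$ for all $m=0,\dots,M-1$. For $t\in\{1,\dots,T-1\}$ let \[ \widetilde V(t)=\sqrt{\frac{T-t}{Tt}}\sum_{r=1}^tV(r)-\sqrt{\frac{t}{T(T-t)}}\sum_{r=t+1}^TV(r). \] Then the maximum of $\|\widetilde V(t)\|^2$ over $t\in\{1,\dots,T-1\}$ is attained at a change point $\nu_m$, $1\le m\le M-1$; and for each $m=1,\dots,M$, restricted to integers $t\in[\nu_{m-1},\nu_m]\cap\{1,\dots,T-1\}$, the function $t\mapsto\|\widetilde V(t)\|^2$ is either monotone or first decreases and then increases.
   Context: $\|\cdot\|$ is the Euclidean norm. The points $\nu_1,\dots,\nu_{M-1}$ are the change points of the piecewise constant sequence $V$. *)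

(* Defs.v *)
From HB Require Import structures.
From mathcomp Require Import all_boot all_order all_algebra.
Set Implicit Arguments. Unset Strict Implicit. Unset Printing Implicit Defensive.
Import Order.TTheory GRing.Theory Num.Theory.
Local Open Scope ring_scope.

Definition sqnorm (R : rcfType) (p : nat) (x : 'rV[R]_p) : R :=
  \sum_(i < p) (x ord0 i) ^+ 2.

Definition Vtilde (R : rcfType) (p T : nat) (V : nat -> 'rV[R]_p) (t : nat)
  : 'rV[R]_p :=
  Num.sqrt ((T - t)%:R / (T%:R * t%:R)) *: (\sum_(1 <= r < t.+1) V r)
  - Num.sqrt (t%:R / (T%:R * (T - t)%:R)) *: (\sum_(t.+1 <= r < T.+1) V r).

Definition nonincr_on (R : rcfType) (a b : nat) (f : nat -> R) : Prop :=
  forall s t, (a <= s)%N -> (s <= t)%N -> (t <= b)%N -> f t <= f s.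
Definition nondecr_on (R : rcfType) (a b : nat) (f : nat -> R) : Prop :=
  forall s t, (a <= s)%N -> (s <= t)%N -> (t <= b)%N -> f s <= f t.

(* Main.v *)
Require Import Defs.
From HB Require Import structures.
From mathcomp Require Import all_boot all_order all_algebra.
From mathcomp Require Import ring lra zify.
Import Order.TTheory GRing.Theory Num.Theory.
Local Open Scope ring_scope.
Set Implicit Arguments. Unset Strict Implicit.
Lemma Lsq (R : rcfType) (T t x y : R) : 0 < t -> t < T ->
  (Num.sqrt ((T - t) / (T * t)) * x - Num.sqrt (t / (T * (T - t))) * y) ^+ 2
  = ((T - t) * x - t * y) ^+ 2 / (T * t * (T - t)).
Proof.
move=> t0 tT.
have T0 : 0 < T by apply: lt_trans tT.
have Tt : 0 < T - t by rewrite subr_gt0.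
have h1 : 0 <= (T - t) / (T * t) by apply: divr_ge0; [lra| apply: mulr_ge0; lra].
have h2 : 0 <= t / (T * (T - t)) by apply: divr_ge0; [lra| apply: mulr_ge0; lra].
have hab : Num.sqrt ((T - t) / (T * t)) * Num.sqrt (t / (T * (T - t))) = T^-1.
  rewrite -sqrtrM // (_ : _ * _ = T^-1 ^+ 2); last by field; apply/and3P; split; apply: lt0r_neq0 => //.
  by rewrite sqrtr_sqr ger0_norm // invr_ge0 ltW.
have e : forall a b : R, (a * x - b * y) ^+ 2 = a ^+ 2 * x ^+ 2 - 2 * (a * b) * x * y + b ^+ 2 * y ^+ 2.
  by move=> a b; ring.
rewrite [LHS]e hab !sqr_sqrtr //.
by field; apply/and3P; split; apply: lt0r_neq0.
Qed.

Definition Qf (R : rcfType) p (a b : 'I_p -> R) (x : R) := \sum_(i < p) (a i + x * b i) ^+ 2.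
Arguments Qf {R p}.

Lemma Lq (R : rcfType) p (a b : 'I_p -> R) (T s t u l : R) :
 0 <= T -> s < t -> t < u -> 0 <= l ->
 Qf a b s <= l * (T*s*(T-s)) -> Qf a b u <= l*(T*u*(T-u)) -> Qf a b t <= l*(T*t*(T-t)).
Proof.
move=> T0 st tu l0 Hs Hu.
have H : (u - s) * Qf a b t <= (u - t) * Qf a b s + (t - s) * Qf a b u.
  rewrite /Qf !mulr_sumr -big_split /=; apply: ler_sum => i _.
  rewrite -subr_ge0.
  have -> : (u - t) * (a i + s * b i) ^+ 2 + (t - s) * (a i + u * b i) ^+ 2 -
     (u - s) * (a i + t * b i) ^+ 2 = (u - t) * (t - s) * (u - s) * (b i ^+ 2) by ring.
  by apply: mulr_ge0; [apply: mulr_ge0; [apply: mulr_ge0|]; lra | apply: sqr_ge0].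
have H2 : (u - t) * Qf a b s + (t - s) * Qf a b u <= l * ((u - t) * (T*s*(T-s)) + (t - s) * (T*u*(T-u))).
  rewrite mulrDr; apply: lerD.
    by rewrite mulrCA; apply: ler_wpM2l => //; lra.
  by rewrite mulrCA; apply: ler_wpM2l => //; lra.
have H3 : (u - t) * (T*s*(T-s)) + (t - s) * (T*u*(T-u)) <= (u - s) * (T*t*(T-t)).
  rewrite -subr_ge0.
  have -> : (u - s) * (T*t*(T-t)) - ((u - t) * (T*s*(T-s)) + (t - s) * (T*u*(T-u)))
    = T * (u - s) * (t - s) * (u - t) by ring.
  by apply: mulr_ge0; [apply: mulr_ge0; [apply: mulr_ge0|]|]; lra.
have H4 := le_trans H (le_trans H2 (ler_wpM2l l0 H3)).
rewrite mulrCA in H4.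
by rewrite -(ler_pM2l (_ : 0 < u - s)) //; lra.
Qed.
Definition Ssum (R : rcfType) p (V : nat -> 'rV[R]_p) k := \sum_(1 <= r < k.+1) V r.
Definition Ev (R : rcfType) p T (V : nat -> 'rV[R]_p) (t : nat) :=
  T%:R *: Ssum V t - t%:R *: Ssum V T.
Definition wf (R : rcfType) (T t : nat) : R := T%:R * t%:R * (T - t)%:R.
Arguments wf {R}.

Lemma f_eq (R : rcfType) p T (V : nat -> 'rV[R]_p) t : (0 < t)%N -> (t < T)%N ->
  sqnorm (Vtilde T V t) = sqnorm (Ev T V t) / wf T t.
Proof.
move=> t0 tT.
have hsplit : \sum_(t.+1 <= r < T.+1) V r = Ssum V T - Ssum V t.
  rewrite /Ssum (@big_cat_nat _ _ _ t.+1 1 T.+1) //=; last by rewrite ltnS ltnW.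
  by rewrite [X in X - _]addrC addrK.
rewrite /Vtilde hsplit /sqnorm /wf mulr_suml; apply: eq_bigr => i _.
rewrite !mxE natrB; last by rewrite ltnW.
rewrite -/(Ssum V t) Lsq ?ltr0n ?ltr_nat //.
by congr (_ * _); congr (_ ^+ 2); ring.
Qed.

Lemma Sseg (R : rcfType) p (V : nat -> 'rV[R]_p) n n1 :
  (forall t, (n < t)%N -> (t <= n1)%N -> V t = V n.+1) ->
  forall k, (n + k <= n1)%N -> Ssum V (n + k) = Ssum V n + k%:R *: V n.+1.
Proof.
move=> hc; elim=> [|k IH] hk; first by rewrite addn0 scale0r addr0.
have hk' : (n + k < n1)%N by rewrite -addnS.
rewrite addnS /Ssum big_nat_recr //= -/(Ssum V (n + k)) IH; last by apply: ltnW.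
rewrite hc //; last by rewrite ltnS leq_addr.
by rewrite -/(Ssum V n) -[k.+1]addn1 natrD scalerDl scale1r addrA.
Qed.

Lemma Eseg (R : rcfType) p T (V : nat -> 'rV[R]_p) n n1 :
  (forall t, (n < t)%N -> (t <= n1)%N -> V t = V n.+1) ->
  exists a b : 'I_p -> R, forall t, (n <= t)%N -> (t <= n1)%N ->
    sqnorm (Ev T V t) = Qf a b t%:R.
Proof.
move=> hc.
exists (fun i => T%:R * Ssum V n ord0 i - n%:R * Ssum V T ord0 i
   - n%:R * (T%:R * V n.+1 ord0 i - Ssum V T ord0 i)).
exists (fun i => T%:R * V n.+1 ord0 i - Ssum V T ord0 i).
move=> t nt tn1.
have := Sseg hc (k := t - n); rewrite subnKC // => /(_ tn1) E.
rewrite /sqnorm /Qf; apply: eq_bigr => i _.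
rewrite /Ev E !mxE natrB //.
by congr (_ ^+ 2); ring.
Qed.
Lemma argmax (R : rcfType) (g : nat -> R) a n :
  exists j, [/\ (a <= j)%N, (j <= a + n)%N &
    forall i, (a <= i)%N -> (i <= a + n)%N -> g i <= g j].
Proof.
elim: n => [|n [j [aj jn H]]].
  exists a; split => //; first by rewrite addn0.
  by move=> i ai; rewrite addn0 => ia; have -> : i = a by lia.
case: (leP (g (a + n.+1)) (g j)) => hg.
  exists j; split => //; first lia.
  move=> i ai; rewrite leq_eqVlt => /orP [/eqP -> //|]; rewrite addnS ltnS => ?; exact: H.
exists (a + n.+1)%N; split => //; first lia.
move=> i ai; rewrite leq_eqVlt => /orP [/eqP -> //|]; rewrite addnS ltnS => hi.
rewrite -addnS; exact: (le_trans (H i ai hi) (ltW hg)).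
Qed.

Lemma argmin (R : rcfType) (g : nat -> R) a n :
  exists j, [/\ (a <= j)%N, (j <= a + n)%N &
    forall i, (a <= i)%N -> (i <= a + n)%N -> g j <= g i].
Proof.
have [j [h1 h2 h3]] := argmax (fun i => - g i) a n.
by exists j; split => // i ai ia; rewrite -lerN2; apply: h3.
Qed.

Lemma sqnorm0 (R : rcfType) p : sqnorm (0 : 'rV[R]_p) = 0.
Proof. by rewrite /sqnorm big1 // => i _; rewrite mxE expr0n. Qed.

Lemma sqnorm_ge0 (R : rcfType) p (x : 'rV[R]_p) : 0 <= sqnorm x.
Proof. by rewrite /sqnorm sumr_ge0 // => i _; apply: sqr_ge0. Qed.

Lemma Ev0 (R : rcfType) p T (V : nat -> 'rV[R]_p) : Ev T V 0 = 0.
Proof. by rewrite /Ev /Ssum big_geq // scaler0 scale0r subr0. Qed.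

Lemma EvT (R : rcfType) p T (V : nat -> 'rV[R]_p) : Ev T V T = 0.
Proof. by rewrite /Ev subrr. Qed.

Theorem proposition1 (R : rcfType) (p T M : nat) (V : nat -> 'rV[R]_p)
  (nu : nat -> nat)
  (hM : (2 <= M)%N)
  (hnu0 : nu 0%N = 0%N)
  (hnuM : nu M = T)
  (hnu_incr : forall m, (m < M)%N -> (nu m < nu m.+1)%N)
  (hconst : forall m t, (m < M)%N -> (nu m < t)%N -> (t <= nu m.+1)%N ->
              V t = V (nu m).+1) :
  let f := fun t => sqnorm (Vtilde T V t) in
  (exists m, [/\ (1 <= m)%N, (m <= M - 1)%N &
     forall t, (1 <= t)%N -> (t <= T - 1)%N -> f t <= f (nu m)])
  /\
  (forall m, (1 <= m)%N -> (m <= M)%N ->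
     let a := maxn (nu m.-1) 1 in
     let b := minn (nu m) (T - 1) in
     [\/ nonincr_on a b f, nondecr_on a b f |
         exists2 k, (a <= k <= b)%N & nonincr_on a k f /\ nondecr_on k b f]).
Proof.
move=> f.
have numono : forall i k, (i + k <= M)%N -> (nu i + k <= nu (i + k))%N.
  move=> i; elim=> [|k IH] hk; first by rewrite !addn0.
  have := hnu_incr (i + k)%N; have := IH; rewrite !addnS. lia.
have nuT : forall i, (i <= M)%N -> (nu i + (M - i) <= T)%N.
  by move=> i iM; rewrite -hnuM -{2}(subnKC iM); apply: numono; lia.
have nui : forall i, (i <= M)%N -> (i <= nu i)%N.
  by move=> i iM; have := numono 0%N i; rewrite hnu0 /=; apply.
have segf : forall t, (t <= T)%N -> exists m, [/\ (m < M)%N, (nu m <= t)%N & (t <= nu m.+1)%N].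
  move=> t tT.
  suff: forall k, (0 < k)%N -> (k <= M)%N -> (t <= nu k)%N ->
     exists m, [/\ (m < k)%N, (nu m <= t)%N & (t <= nu m.+1)%N].
    move=> /(_ M) []; try lia; move=> m [? ? ?]; by exists m.
  elim=> [//|k IH] _ kM tk.
  case: (posnP k) => [k0|kp].
    by subst k; exists 0%N; split => //; rewrite hnu0.
  case: (leqP t (nu k)) => tk'.
    by have [|m [? ? ?]] := IH kp _ tk'; [lia| exists m; split => //; lia].
  by exists k; split => //; lia.
have fle : forall x l, (0 < x)%N -> (x < T)%N ->
    (f x <= l) = (sqnorm (Ev T V x) <= l * wf T x).
  move=> x l x0 xT; rewrite /f f_eq // ler_pdivrMr //.
  by rewrite /wf !mulr_gt0 // ltr0n //; lia.
have G : forall m s t u l, (m < M)%N -> (nu m <= s)%N -> (s <= t)%N -> (t <= u)%N ->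
    (u <= nu m.+1)%N -> (0 < t)%N -> (t < T)%N -> 0 <= l ->
    sqnorm (Ev T V s) <= l * wf T s -> sqnorm (Ev T V u) <= l * wf T u -> f t <= l.
  move=> m s t u l mM ns st tu un t0 tT l0 Hs Hu.
  rewrite fle //.
  have [a [b Hab]] := Eseg T (fun t => hconst m t mM).
  have uT : (u <= T)%N by have := nuT m.+1 mM; lia.
  case: (ltngtP s t) => [st'|//|<- //]; last lia.
  case: (ltngtP t u) => [tu'|//|-> //]; last lia.
  move: Hs Hu; rewrite /wf !Hab //; try lia.
  rewrite !natrB //; try lia.
  by apply: Lq; rewrite ?ler0n ?ltr_nat.
have H0 : forall x l, (0 < x)%N -> (x < T)%N -> f x <= l -> sqnorm (Ev T V x) <= l * wf T x.
  by move=> x l ? ?; rewrite fle.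
have E0 : forall l, sqnorm (Ev T V 0) <= l * wf T 0.
  by move=> l; rewrite Ev0 sqnorm0 /wf mulr0 mul0r mulr0.
have ET : forall l, sqnorm (Ev T V T) <= l * wf T T.
  by move=> l; rewrite EvT sqnorm0 /wf subnn mulr0 mulr0.
have f0 : forall x, 0 <= f x by move=> x; apply: sqnorm_ge0.
split.
  have [j [j1 jM Hj]] := argmax (fun i => f (nu i)) 1 (M - 2).
  have eM : (1 + (M - 2) = M - 1)%N by lia.
  rewrite eM in jM Hj.
  exists j; split => // t t1 tT1.
  have [m [mM nm mn]] := segf t ltac:(lia).
  have nuTi : forall i, (i < M)%N -> (nu i < T)%N by move=> i iM; have := nuT i; lia.
  have nu1 : forall i, (0 < i)%N -> (i <= M)%N -> (0 < nu i)%N by move=> i ? ?; have := nui i; lia.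
  case: (posnP m) => [m0|mp].
    subst m.
    have h1 : (0 < nu 1%N)%N by apply: nu1; lia.
    have h2 : (nu 1%N < T)%N by apply: nuTi; lia.
    apply: (le_trans _ (Hj 1%N _ _)); try lia.
    apply: (G 0%N 0%N t (nu 1%N) (f (nu 1%N)) mM) => //; try lia; try (by rewrite hnu0);
    (match goal with |- context [?l * wf _ ?x] => move: (H0 x l) => HH end); apply: HH => //; lia.
  have h1 : (0 < nu m)%N by apply: nu1; lia.
  have h2 : (nu m < T)%N by apply: nuTi; lia.
  have [mM'|mM'] : (m.+1 < M)%N \/ m.+1 = M by lia.
    have h3 : (0 < nu m.+1)%N by apply: nu1; lia.
    have h4 : (nu m.+1 < T)%N by apply: nuTi; lia.
    apply: (G m (nu m) t (nu m.+1) (f (nu j)) mM) => //; try lia;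
    (match goal with |- context [?l * wf _ ?x] => move: (H0 x l) => HH end); apply: HH => //; try lia; apply: Hj; lia.
  apply: (le_trans _ (Hj m _ _)); try lia.
  apply: (G m (nu m) t T (f (nu m)) mM) => //; try lia; try (by rewrite mM' hnuM);
  (match goal with |- context [?l * wf _ ?x] => move: (H0 x l) => HH end); apply: HH => //; lia.
move=> m m1 mM a b.
have mM' : (m.-1 < M)%N by lia.
have mS : m.-1.+1 = m by lia.
have nuTm : (nu m <= T)%N by have := nuT m mM; lia.
case: (leqP a b) => ab; last first.
  by constructor 1 => s t ?; lia.
have [k [ak kb Hk]] := argmin f a (b - a).
rewrite subnKC // in kb Hk.
constructor 3; exists k; first by rewrite ak kb.
split.
  move=> s t ? ? ?.
  apply: (G m.-1 s t k _ mM'); rewrite ?mS => //; try lia.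
  - by apply: H0 => //; lia.
  - by apply: H0; [| | apply: Hk]; lia.
move=> s t ? ? ?.
apply: (G m.-1 k s t _ mM'); rewrite ?mS => //; try lia.
- by apply: H0; [| | apply: Hk]; lia.
- by apply: H0 => //; lia.
Qed.
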